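(* Let $G$ be a group, $N$ a normal subgroup, $m\in\mathbb{N}$ and $x,x_1,\dots,x_m\in N$ with $x_1\cdots x_m\in[G,N]$. Then \[\mathrm{scl}_{G,N}\Big(x+x^{-1}+\sum_{i=1}^mx_i\Big)=\mathrm{scl}_{G,N}\Big(\sum_{i=1}^mx_i\Big).\]
   Context: $\mathrm{cl}_{G,N}$ is the word length on $[G,N]$ with respect to $\{[g,x]=gxg^{-1}x^{-1}:g\in G,x\in N\}$. For a finite list $y_1,\dots,y_r\in N$ (repetitions allowed) with $y_1\cdots y_r\in[G,N]$, $\mathrm{cl}_{G,N}(y_1+\cdots+y_r)=\inf_{g_i\in G}\mathrm{cl}_{G,N}(y_1g_1y_2g_1^{-1}\cdots g_{r-1}y_rg_{r-1}^{-1})$ and $\mathrm{scl}_{G,N}(y_1+\cdots+y_r)=\lim_{n\to\infty}\frac1n\mathrm{cl}_{G,N}(y_1^n+\cdots+y_r^n)$. *)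

(* Defs.v *)
From Stdlib Require Import Reals.
From Coquelicot Require Import Coquelicot.
From mathcomp Require Import all_boot.
Set Implicit Arguments. Unset Strict Implicit. Unset Printing Implicit Defensive.

Local Open Scope group_scope.

Section SCL.
Variable G : groupType.

Definition pcomm (g x : G) : G := g * x * g^-1 * x^-1.

Definition normal_subgroup (N : G -> Prop) : Prop :=
  N 1 /\ (forall x y, N x -> N y -> N (x * y)) /\ (forall x, N x -> N x^-1)
  /\ (forall g x, N x -> N (g * x * g^-1)).

(* [G,N] = the subgroup generated by {[g,x] : g in G, x in N}, i.e. the set of
   finite products of such commutators and their inverses *)
Definition in_commGN (N : G -> Prop) (w : G) : Prop :=
  exists s : seq (bool * (G * G)),
    (forall p, List.In p s -> N p.2.2) /\
    w = foldr (fun p acc => (if p.1 then (pcomm p.2.1 p.2.2)^-1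
                             else pcomm p.2.1 p.2.2) * acc) 1 s.

Definition comm_prod (N : G -> Prop) (n : nat) (w : G) : Prop :=
  exists s : seq (G * G), size s = n /\
    (forall p, List.In p s -> N p.2) /\
    w = foldr (fun p acc => pcomm p.1 p.2 * acc) 1 s.

Definition clGN (N : G -> Prop) (w : G) : R :=
  real (Glb_Rbar (fun r => exists n, r = INR n /\ comm_prod N n w)).

(* y_1 g_1 y_2 g_1^-1 g_2 y_3 g_2^-1 ... g_{r-1} y_r g_{r-1}^-1 *)
Fixpoint mixed_word_aux (ys : seq G) (gs : nat -> G) (i : nat) : G :=
  match ys with
  | [::] => 1
  | y :: ys' => (gs i * y * (gs i)^-1) * mixed_word_aux ys' gs i.+1
  end.
Definition mixed_word (ys : seq G) (gs : nat -> G) : G :=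
  match ys with
  | [::] => 1
  | y :: ys' => y * mixed_word_aux ys' gs 1
  end.

(* cl_{G,N}(y_1 + ... + y_r) = inf over g_i of cl_{G,N}(mixed word) *)
Definition clGN_sum (N : G -> Prop) (ys : seq G) : R :=
  real (Glb_Rbar (fun r => exists gs : nat -> G, r = clGN N (mixed_word ys gs))).

(* scl_{G,N}(y_1 + ... + y_r) = lim_n cl_{G,N}(y_1^n + ... + y_r^n) / n *)
Definition sclGN_sum (N : G -> Prop) (ys : seq G) : R :=
  real (Lim_seq (fun n => Rdiv (clGN_sum N (map (fun y => y ^+ n) ys)) (INR n))).

End SCL.

(* Main.v *)
Require Import Defs.
From Stdlib Require Import Reals Lra Lia ZArith.
From Coquelicot Require Import Coquelicot.

Lemma limsup_close (u v : nat -> R) (l : Rbar) :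
  (forall eps : posreal, exists N, forall n, le N n -> Rabs (v n - u n) < eps) ->
  is_LimSup_seq u l -> is_LimSup_seq v l.
Proof.
intros Hc Hu. destruct l as [l| |]; simpl in *.
- intros eps. split.
  + intros N0. destruct (Hc (pos_div_2 eps)) as [N1 HN1].
    destruct (proj1 (Hu (pos_div_2 eps)) (max N0 N1)) as [n [Hn Hun]].
    exists n. split; [lia|]. specialize (HN1 n ltac:(lia)).
    apply Rabs_def2 in HN1. simpl in *. lra.
  + destruct (Hc (pos_div_2 eps)) as [N1 HN1].
    destruct (proj2 (Hu (pos_div_2 eps))) as [N2 HN2].
    exists (max N1 N2). intros n Hn. specialize (HN1 n ltac:(lia)).
    specialize (HN2 n ltac:(lia)).
    apply Rabs_def2 in HN1. simpl in *. lra.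
- intros M N0. destruct (Hc (mkposreal 1 Rlt_0_1)) as [N1 HN1].
  destruct (Hu (M+1) (max N0 N1)) as [n [Hn Hun]].
  exists n. split; [lia|]. specialize (HN1 n ltac:(lia)).
  apply Rabs_def2 in HN1. simpl in *. lra.
- intros M. destruct (Hc (mkposreal 1 Rlt_0_1)) as [N1 HN1].
  destruct (Hu (M-1)) as [N2 HN2].
  exists (max N1 N2). intros n Hn. specialize (HN1 n ltac:(lia)).
  specialize (HN2 n ltac:(lia)).
  apply Rabs_def2 in HN1. simpl in *. lra.
Qed.

Lemma lim_close (u v : nat -> R) :
  (forall eps : posreal, exists N, forall n, le N n -> Rabs (v n - u n) < eps) ->
  Lim_seq v = Lim_seq u.
Proof.
intros Hc. unfold Lim_seq.
assert (E1 : LimSup_seq v = LimSup_seq u).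
{ destruct (ex_LimSup_seq u) as [l Hl].
  rewrite (is_LimSup_seq_unique _ _ Hl).
  apply is_LimSup_seq_unique. exact (limsup_close u v l Hc Hl). }
assert (E2 : LimInf_seq v = LimInf_seq u).
{ destruct (ex_LimInf_seq u) as [l Hl].
  rewrite (is_LimInf_seq_unique _ _ Hl).
  apply is_LimInf_seq_unique.
  apply is_LimSup_opp_LimInf_seq.
  apply (limsup_close (fun n => - u n)).
  - intros eps. destruct (Hc eps) as [N HN]. exists N. intros n Hn.
    replace (- v n - - u n) with (- (v n - u n)) by ring.
    rewrite Rabs_Ropp. auto.
  - apply is_LimSup_opp_LimInf_seq. exact Hl. }
rewrite E1, E2. reflexivity.
Qed.

Lemma glb_facts (E : R -> Prop) :
  (exists r, E r) -> (forall r, E r -> 0 <= r) ->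
  (forall r, E r -> real (Glb_Rbar E) <= r) /\
  (forall b, (forall r, E r -> b <= r) -> b <= real (Glb_Rbar E)) /\
  0 <= real (Glb_Rbar E).
Proof.
intros [r0 Hr0] Hpos. destruct (Glb_Rbar_correct E) as [H1 H2].
destruct (Glb_Rbar E) as [l| |] eqn:El; simpl.
- split; [|split].
  + intros r Hr. specialize (H1 r Hr). simpl in H1. exact H1.
  + intros b Hb. specialize (H2 (Finite b)). simpl in H2. apply H2.
    intros r Hr. simpl. auto.
  + specialize (H2 (Finite 0)). simpl in H2. apply H2.
    intros r Hr. simpl. auto.
- specialize (H1 r0 Hr0). simpl in H1. contradiction.
- specialize (H2 (Finite 0)). simpl in H2. exfalso. apply H2.
  intros r Hr. simpl. auto.
Qed.

Lemma glb_empty (E : R -> Prop) : (forall r, ~ E r) -> real (Glb_Rbar E) = 0.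
Proof.
intros He. destruct (Glb_Rbar_correct E) as [H1 H2].
assert (H : Rbar_le p_infty (Glb_Rbar E)).
{ apply H2. intros r Hr. exfalso. exact (He r Hr). }
destruct (Glb_Rbar E); simpl in *; tauto.
Qed.

Lemma inv_small (eps : posreal) : exists N, forall n, le N n -> / INR (S n) < eps.
Proof.
destruct (archimed (/ eps)) as [H1 _].
assert (Hp : 0 < / eps) by (apply Rinv_0_lt_compat; apply cond_pos).
exists (Z.to_nat (up (/ eps))). intros n Hn.
assert (Hz : (0 <= up (/ eps))%Z).
{ apply le_IZR. lra. }
assert (HI : INR (Z.to_nat (up (/eps))) = IZR (up (/ eps))).
{ rewrite INR_IZR_INZ. rewrite Z2Nat.id; auto. }
assert (Hle : INR (Z.to_nat (up (/eps))) <= INR n) by (apply le_INR; exact Hn).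
rewrite S_INR.
assert (/ eps < INR n + 1) by lra.
apply Rinv_lt_contravar in H.
- rewrite Rinv_inv in H. exact H.
- apply Rmult_lt_0_compat; lra.
Qed.
From mathcomp Require Import all_boot.
Local Open Scope group_scope.

Section Grp.
Variable G : groupType.
Variable N : G -> Prop.
Hypothesis HN : normal_subgroup N.

Lemma conj_mul (h a b : G) : h * (a * b) * h^-1 = (h * a * h^-1) * (h * b * h^-1).
Proof. by rewrite !mulgA mulgVK. Qed.

Lemma conj_inv (h a : G) : h * a^-1 * h^-1 = (h * a * h^-1)^-1.
Proof. by rewrite !invgM invgK !mulgA. Qed.

Lemma conj_pcomm (h a b : G) :
  h * pcomm a b * h^-1 = pcomm (h * a * h^-1) (h * b * h^-1).
Proof. by rewrite /pcomm -!conj_inv -!conj_mul. Qed.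

Lemma comm_prod_conj k (w h : G) : comm_prod N k w -> comm_prod N k (h * w * h^-1).
Proof.
case: HN => _ [_ [_ Hc]].
case=> s [Hs [Hin ->]]; exists (map (fun p => (h * p.1 * h^-1, h * p.2 * h^-1)) s).
split; first by rewrite size_map.
elim: s {Hs} Hin => [|p s IH] Hin /=.
  split; first by [].
  by rewrite mulg1 mulgV.
have [IH1 IH2] := IH (fun q Hq => Hin q (or_intror Hq)).
split.
  move=> q [<-|Hq] /=; first by apply: Hc; apply: Hin; left.
  exact: IH1.
by rewrite conj_mul conj_pcomm IH2.
Qed.

Lemma comm_prod_cons k (w g y : G) : N y -> comm_prod N k w -> comm_prod N k.+1 (pcomm g y * w).
Proof.
move=> Ny [s [Hs [Hin ->]]]; exists ((g, y) :: s); split; first by rewrite /= Hs.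
split; last by [].
by move=> q [<-|Hq] //; apply: Hin.
Qed.

Lemma N_pow (x : G) n : N x -> N (x ^+ n).
Proof.
case: HN => H1 [HM _] Nx; elim: n => [|n IH]; first by [].
by rewrite expgS; apply: HM.
Qed.

Lemma aux_ext ys (f g : nat -> G) i :
  (forall j, (i <= j)%N -> f j = g j) -> mixed_word_aux ys f i = mixed_word_aux ys g i.
Proof.
elim: ys i => [|y ys IH] i H //=.
rewrite H // (IH i.+1) // => j Hj; apply: H; exact: ltnW.
Qed.

Lemma aux_shift ys (gs : nat -> G) i k :
  mixed_word_aux ys gs (i + k) = mixed_word_aux ys (fun j => gs (j + k)%N) i.
Proof.
elim: ys i => [|y ys IH] i //=.
by rewrite -IH addSn.
Qed.

Lemma aux_conj ys (gs : nat -> G) i h :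
  h * mixed_word_aux ys gs i * h^-1 = mixed_word_aux ys (fun j => h * gs j) i.
Proof.
elim: ys i => [|y ys IH] i /=; first by rewrite mulg1 mulgV.
by rewrite conj_mul IH invgM !mulgA.
Qed.

Lemma aux_key ys (gs : nat -> G) :
  mixed_word_aux ys gs 2%N =
  gs 2%N * mixed_word ys (fun j => (gs 2%N)^-1 * gs (j + 2)%N) * (gs 2%N)^-1.
Proof.
case: ys => [|y ys] /=; first by rewrite mulg1 mulgV.
rewrite -aux_conj invgK -(aux_shift ys gs 1 2) /=.
by rewrite !mulgA mulgK.
Qed.

Lemma mixed_ext ys (f g : nat -> G) :
  (forall j, (1 <= j)%N -> f j = g j) -> mixed_word ys f = mixed_word ys g.
Proof. by case: ys => [|y ys] //= H; rewrite (aux_ext _ _ _ _ H). Qed.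

End Grp.
From Stdlib Require Import Classical.
Delimit Scope R_scope with Re.

Section Cl.
Variable G : groupType.
Variable N : G -> Prop.
Hypothesis HN : normal_subgroup N.

Lemma cl_ge0 (w : G) : (0 <= clGN N w)%Re.
Proof.
case: (classic (exists k, comm_prod N k w)) => [[k Hk]|Hn].
  have [_ [_ H]] := glb_facts (fun r => exists n, r = INR n /\ comm_prod N n w)
     (ex_intro _ (INR k) (ex_intro _ k (conj erefl Hk)))
     (fun r '(ex_intro n (conj e _)) => eq_ind_r (fun r => (0 <= r)%Re) (pos_INR n) e).
  exact H.
rewrite /clGN glb_empty; first exact: Rle_refl.
move=> r [n [_ Hc]]; apply: Hn; by exists n.
Qed.

Lemma cl_facts (w : G) k : comm_prod N k w ->
  (clGN N w <= INR k)%Re /\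
  (forall b, (forall n, comm_prod N n w -> b <= INR n)%Re -> (b <= clGN N w)%Re).
Proof.
move=> Hk.
have [H1 [H2 _]] := glb_facts (fun r => exists n, r = INR n /\ comm_prod N n w)
     (ex_intro _ (INR k) (ex_intro _ k (conj erefl Hk)))
     (fun r '(ex_intro n (conj e _)) => eq_ind_r (fun r => (0 <= r)%Re) (pos_INR n) e).
split; first by apply: H1; exists k.
move=> b Hb; apply: H2 => r [n [-> Hn]]; exact: Hb.
Qed.

Lemma cl_step (w w' : G) :
  (forall k, comm_prod N k w -> comm_prod N k.+1 w') ->
  (forall k, comm_prod N k w' -> exists k', comm_prod N k' w) ->
  (clGN N w' <= clGN N w + 1)%Re.
Proof.
move=> H1 H2.
case: (classic (exists k, comm_prod N k w)) => [[k Hk]|Hn].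
  have [_ Hb] := cl_facts _ _ Hk.
  suff : (clGN N w' - 1 <= clGN N w)%Re by lra.
  apply: Hb => n Hn.
  have [Hle _] := cl_facts _ _ (H1 _ Hn).
  rewrite S_INR in Hle; lra.
have E1 : clGN N w = 0%Re.
  rewrite /clGN glb_empty // => r [n [_ Hc]]; apply: Hn; by exists n.
have E2 : clGN N w' = 0%Re.
  rewrite /clGN glb_empty // => r [n [_ Hc]]; apply: Hn; exact: H2 Hc.
rewrite E1 E2; lra.
Qed.

Definition Eset (ys : seq G) := fun r => exists gs : nat -> G, r = clGN N (mixed_word ys gs).

Lemma Eset_facts ys :
  (forall r, Eset ys r -> clGN_sum N ys <= r)%Re /\
  (forall b, (forall r, Eset ys r -> b <= r) -> b <= clGN_sum N ys)%Re.
Proof.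
have [H1 [H2 _]] := glb_facts (Eset ys)
  (ex_intro _ _ (ex_intro _ (fun _ => 1) erefl))
  (fun r '(ex_intro gs e) => eq_ind_r (fun r => (0 <= r)%Re) (cl_ge0 _) e).
by split.
Qed.

Lemma diff_bound (a : G) (Na : N a) ys :
  (clGN_sum N [:: a, a^-1 & ys] <= clGN_sum N ys <= clGN_sum N [:: a, a^-1 & ys] + 1)%Re.
Proof.
have [A1 A2] := Eset_facts [:: a, a^-1 & ys].
have [B1 B2] := Eset_facts ys.
split.
  apply: B2 => r [gs' ->]; apply: A1.
  exists (fun j => if (j <= 2)%N then 1 else gs' (j - 2)%N).
  rewrite /= aux_key /= invg1 !mul1g !mulg1 mulVKg.
  congr clGN; apply: mixed_ext => j Hj; rewrite mul1g.
  have -> : (j + 2 <= 2)%N = false by rewrite -{2}(add0n 2%N) leq_add2r; case: j Hj.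
  by rewrite addnK.
suff : (clGN_sum N ys - 1 <= clGN_sum N [:: a, a^-1 & ys])%Re by lra.
apply: A2 => r [gs ->].
set g1 := gs 1%N; set g2 := gs 2%N.
set M := mixed_word ys (fun j => g2^-1 * gs (j + 2)%N).
have Hw : mixed_word [:: a, a^-1 & ys] gs = (a * g1 * a^-1 * g1^-1) * (g2 * M * g2^-1).
  by rewrite /= aux_key !mulgA.
have HM : (clGN N M <= clGN N (mixed_word [:: a, a^-1 & ys] gs) + 1)%Re.
  apply: cl_step => k Hk.
    have H := comm_prod_cons _ _ _ _ g1 _ Na Hk.
    have Heq : pcomm g1 a * mixed_word [:: a, a^-1 & ys] gs = g2 * M * g2^-1.
      rewrite Hw /pcomm !mulgA.
      by rewrite mulgVK mulgVK mulgK mulgV mul1g.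
    rewrite Heq in H.
    have := comm_prod_conj _ _ HN _ _ (g2^-1) H.
    by rewrite invgK !mulgA mulVg mul1g mulgVK.
  exists k.+1; rewrite Hw.
  have -> : a * g1 * a^-1 * g1^-1 = pcomm (a * g1 * a^-1) a^-1.
    by rewrite /pcomm !invgM !invgK !mulgA !mulgVK.
  apply: comm_prod_cons.
    by case: HN => _ [_ [HV _]]; apply: HV.
  exact: comm_prod_conj.
have HB : (clGN_sum N ys <= clGN N M)%Re by apply: B1; exists (fun j => g2^-1 * gs (j + 2)%N).
lra.
Qed.

End Cl.

Theorem lemma5p14 (G : groupType) (N : G -> Prop) (HN : normal_subgroup N)
  (m : nat) (x : G) (xs : seq G) (Hm : size xs = m) (Hx : N x)
  (Hxs : forall y, List.In y xs -> N y)
  (Hprod : in_commGN N (foldr (fun a b => a * b) 1 xs)) :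
  sclGN_sum N [:: x, x^-1 & xs] = sclGN_sum N xs.
Proof.
rewrite /sclGN_sum; congr real; apply: lim_close => eps.
have [N0 HN0] := inv_small eps.
exists N0.+1 => n Hn.
case: n Hn => [|n] Hn; first by inversion Hn.
have Hn' : le N0 n by apply: le_S_n.
have Hk := HN0 n Hn'.
set kk := INR n.+1 in Hk *.
rewrite /= expVgn.
have [h1 h2] := diff_bound _ _ HN _ (N_pow _ _ HN _ n.+1 Hx) (map (fun y => y ^+ n.+1) xs).
set cL := clGN_sum N _ in h1 h2 *.
set cY := clGN_sum N _ in h1 h2 *.
have Hpos : (0 < / INR n.+1)%Re.
  apply: Rinv_0_lt_compat; apply: lt_0_INR; apply: Nat.lt_0_succ.
rewrite /Rdiv.
rewrite -/kk in Hpos; clearbody kk cL cY; move: h1 h2 Hpos Hk; set t := / kk; move=> h1 h2 Hpos Hk.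
apply: Rabs_def1; nra.
Qed.
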